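(* Let $X$ be a chain connected uniform space. Each of the following conditions implies that $X$ is joinable: (1) $\mathrm{pro}\text{-}\pi_1(X,x_0)$ is trivial for some $x_0\in X$; (2) $X$ has a countable base of entourages and $\varprojlim^1\mathrm{pro}\text{-}\pi_1(X,x_0)=0$ for some $x_0\in X$.
   Context: $R(X,E)$ is the Rips complex of $X$ (vertex set $X$, simplices the finite $F$ with $F\times F\subset E$). $X$ is chain connected if for each entourage $E$ any two points are joined by a sequence $x_0,\dots,x_n$ with $(x_i,x_{i+1})\in E$. $\mathrm{pro}\text{-}\pi_1(X,x_0)=\{\pi_1(R(X,E),x_0)\}_E$ with inclusion-induced bonding maps, entourages ordered by reverse inclusion; it is trivial if for every $E$ there is $F\subset E$ with $\pi_1(R(X,F),x_0)\to\pi_1(R(X,E),x_0)$ trivial. For a decreasing countable base $E_1\supset E_2\supset\cdots$ and $G_n=\pi_1(R(X,E_n),x_0)$, $\varprojlim^1\{G_n\}=0$ means: for every sequence $g_n\in G_n$ there is a sequence $h_n\in G_n$ with $g_k=h_k\cdot(\text{image of }h_{k+1})^{-1}$ in $G_k$ for all $k$. A generalized path from $x$ to $y$ is a family $\{[c_E]\}_E$ of homotopy classes rel. end-points of paths from $x$ to $y$ in $R(X,E)$ with $c_F\simeq c_E$ rel. end-points in $R(X,E)$ for $F\subset E$; $X$ is joinable if any two points are joined by a generalized path. *)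

(* Defs.v *)
From Stdlib Require Import List Relations.
Import ListNotations.
Set Implicit Arguments.

Section Defs.
Variable X : Type.

Record is_uniformity (ent : (X -> X -> Prop) -> Prop) : Prop := {
  unif_nonempty : exists E, ent E;
  unif_refl : forall E, ent E -> forall x, E x x;
  unif_super : forall E F : X -> X -> Prop,
      ent E -> (forall x y, E x y -> F x y) -> ent F;
  unif_inter : forall E F, ent E -> ent F -> ent (fun x y => E x y /\ F x y);
  unif_inv : forall E, ent E -> ent (fun x y => E y x);
  unif_comp : forall E, ent E ->
      exists F, ent F /\ forall x y z, F x y -> F y z -> E x z
}.

Definition subrel (F E : X -> X -> Prop) : Prop := forall x y, F x y -> E x y.

Inductive Chain (R : X -> X -> Prop) : list X -> Prop :=
| Chain_nil : Chain R []
| Chain_one : forall a, Chain R [a]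
| Chain_cons : forall a b l, R a b -> Chain R (b :: l) -> Chain R (a :: b :: l).

Definition chain_connected (ent : (X -> X -> Prop) -> Prop) : Prop :=
  forall E, ent E -> forall x y : X,
    exists l : list X, Chain E l /\ hd_error l = Some x /\ last l x = y.

Definition rips_simplex (E : X -> X -> Prop) (F : list X) : Prop :=
  forall a b, In a F -> In b F -> E a b.

Definition rips_edge (E : X -> X -> Prop) (a b : X) : Prop :=
  rips_simplex E [a; b].

(* Edge paths in R(X,E) from x to y: vertex sequences, consecutive vertices
   spanning a simplex (equal or adjacent). *)
Definition epath (E : X -> X -> Prop) (x y : X) (l : list X) : Prop :=
  Chain (rips_edge E) l /\ hd_error l = Some x /\ last l x = y.

Inductive ep_move (E : X -> X -> Prop) : list X -> list X -> Prop :=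
| ep_stutter : forall l1 a l2, ep_move E (l1 ++ a :: a :: l2) (l1 ++ a :: l2)
| ep_triangle : forall l1 a b c l2, rips_simplex E [a; b; c] ->
    ep_move E (l1 ++ a :: b :: c :: l2) (l1 ++ a :: c :: l2).

Definition ep_homotopic (E : X -> X -> Prop) : list X -> list X -> Prop :=
  clos_refl_sym_trans (list X) (ep_move E).

Definition loop_mul (p q : list X) : list X := p ++ tl q.
Definition loop_inv (p : list X) : list X := rev p.

Definition pro_pi1_trivial (ent : (X -> X -> Prop) -> Prop) (x0 : X) : Prop :=
  forall E, ent E -> exists F, ent F /\ subrel F E /\
    forall p, epath F x0 x0 p -> ep_homotopic E p [x0].

Definition decreasing_countable_base (ent : (X -> X -> Prop) -> Prop)
    (B : nat -> X -> X -> Prop) : Prop :=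
  (forall n, ent (B n)) /\ (forall n, subrel (B (S n)) (B n)) /\
  (forall E, ent E -> exists n, subrel (B n) E).

(* lim^1 of G_n = pi_1(R(X,B n),x0) vanishes. *)
Definition lim1_zero (B : nat -> X -> X -> Prop) (x0 : X) : Prop :=
  forall g : nat -> list X, (forall n, epath (B n) x0 x0 (g n)) ->
  exists h : nat -> list X, (forall n, epath (B n) x0 x0 (h n)) /\
    forall k, ep_homotopic (B k) (g k) (loop_mul (h k) (loop_inv (h (S k)))).

Definition generalized_path (ent : (X -> X -> Prop) -> Prop) (x y : X)
    (c : (X -> X -> Prop) -> list X) : Prop :=
  (forall E, ent E -> epath E x y (c E)) /\
  (forall E F, ent E -> ent F -> subrel F E -> ep_homotopic E (c F) (c E)).

Definition joinable (ent : (X -> X -> Prop) -> Prop) : Prop :=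
  forall x y : X, exists c, generalized_path ent x y c.

End Defs.

(* Main.v *)
Require Import Defs.
From Stdlib Require Import List Relations.
From Stdlib Require Import Classical ClassicalEpsilon Arith Lia.
Import ListNotations.
Unset Implicit Arguments.

Lemma chain_mono {X} (R S : X -> X -> Prop) l :
  (forall a b, R a b -> S a b) -> Chain R l -> Chain S l.
Proof. intros H C; induction C; constructor; auto. Qed.

Lemma chain_app2 {X} (R : X -> X -> Prop) l1 a l2 :
  Chain R (l1 ++ [a]) -> Chain R (a :: l2) -> Chain R (l1 ++ a :: l2).
Proof.
  induction l1 as [|b l1 IH]; simpl; intros H1 H2; auto.
  destruct l1 as [|c l1]; simpl in *.
  - inversion H1; subst. constructor; auto.
  - inversion H1; subst. constructor; auto.
Qed.

Lemma chain_rev {X} (R : X -> X -> Prop) l :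
  (forall a b, R a b -> R b a) -> Chain R l -> Chain R (rev l).
Proof.
  intros Hs C; induction C; simpl; try constructor.
  simpl in IHC. rewrite <- app_assoc. simpl. apply chain_app2; auto.
  constructor; [auto| constructor].
Qed.

Lemma rips_edge_sym {X} (E : X -> X -> Prop) a b : rips_edge E a b -> rips_edge E b a.
Proof. unfold rips_edge, rips_simplex; intros H u v Hu Hv; apply H; simpl in *; intuition. Qed.

Lemma rips_edge_of {X} (E : X -> X -> Prop) a b :
  (forall z, E z z) -> E a b -> E b a -> rips_edge E a b.
Proof. unfold rips_edge, rips_simplex; intros Hr H1 H2 u v Hu Hv; simpl in *;
  destruct Hu as [<-|[<-|[]]]; destruct Hv as [<-|[<-|[]]]; auto. Qed.

Lemma rips_edge_refl {X} (E : X -> X -> Prop) a : E a a -> rips_edge E a a.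
Proof. unfold rips_edge, rips_simplex; intros H u v Hu Hv; simpl in *;
  destruct Hu as [<-|[<-|[]]]; destruct Hv as [<-|[<-|[]]]; auto. Qed.

Lemma rips_simplex_mono {X} (F E : X -> X -> Prop) l :
  subrel F E -> rips_simplex F l -> rips_simplex E l.
Proof. unfold rips_simplex, subrel; auto. Qed.

Lemma rips_tri {X} (E : X -> X -> Prop) a b : rips_edge E a b -> rips_simplex E [a;b;a].
Proof. unfold rips_edge, rips_simplex; intros H u v Hu Hv; apply H; simpl in *; intuition. Qed.

Lemma rips_simplex_rev3 {X} (E : X -> X -> Prop) a b c :
  rips_simplex E [a;b;c] -> rips_simplex E [c;b;a].
Proof. unfold rips_simplex; intros H u v Hu Hv; apply H; simpl in *; intuition. Qed.

Lemma move_ctx {X} (E : X -> X -> Prop) p q l l' :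
  ep_move E l l' -> ep_move E (p ++ l ++ q) (p ++ l' ++ q).
Proof.
  intros M; destruct M.
  - replace (p ++ (l1 ++ a :: a :: l2) ++ q) with ((p ++ l1) ++ a :: a :: (l2 ++ q))
      by (rewrite <- !app_assoc; reflexivity).
    replace (p ++ (l1 ++ a :: l2) ++ q) with ((p ++ l1) ++ a :: (l2 ++ q))
      by (rewrite <- !app_assoc; reflexivity).
    constructor.
  - replace (p ++ (l1 ++ a :: b :: c :: l2) ++ q) with ((p ++ l1) ++ a :: b :: c :: (l2 ++ q))
      by (rewrite <- !app_assoc; reflexivity).
    replace (p ++ (l1 ++ a :: c :: l2) ++ q) with ((p ++ l1) ++ a :: c :: (l2 ++ q))
      by (rewrite <- !app_assoc; reflexivity).
    constructor; auto.
Qed.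

Lemma hom_ctx {X} (E : X -> X -> Prop) p q l l' :
  ep_homotopic E l l' -> ep_homotopic E (p ++ l ++ q) (p ++ l' ++ q).
Proof.
  intros H; induction H.
  - apply rst_step; apply move_ctx; auto.
  - apply rst_refl.
  - apply rst_sym; auto.
  - eapply rst_trans; eauto.
Qed.

Lemma hom_app_r {X} (E : X -> X -> Prop) p l l' :
  ep_homotopic E l l' -> ep_homotopic E (p ++ l) (p ++ l').
Proof. intros H. pose proof (@hom_ctx _ E p [] l l' H) as H'. rewrite !app_nil_r in H'. exact H'. Qed.

Lemma hom_app_l {X} (E : X -> X -> Prop) q l l' :
  ep_homotopic E l l' -> ep_homotopic E (l ++ q) (l' ++ q).
Proof. intros H. exact (@hom_ctx _ E [] q l l' H). Qed.

Lemma hom_mono {X} (F E : X -> X -> Prop) l l' :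
  subrel F E -> ep_homotopic F l l' -> ep_homotopic E l l'.
Proof.
  intros HFE H; induction H.
  - apply rst_step. destruct H; constructor. eapply rips_simplex_mono; eauto.
  - apply rst_refl.
  - apply rst_sym; auto.
  - eapply rst_trans; eauto.
Qed.

Lemma move_rev {X} (E : X -> X -> Prop) l l' :
  ep_move E l l' -> ep_move E (rev l) (rev l').
Proof.
  intros M; destruct M.
  - replace (rev (l1 ++ a :: a :: l2)) with (rev l2 ++ a :: a :: rev l1)
      by (rewrite rev_app_distr; simpl; rewrite <- !app_assoc; reflexivity).
    replace (rev (l1 ++ a :: l2)) with (rev l2 ++ a :: rev l1)
      by (rewrite rev_app_distr; simpl; rewrite <- !app_assoc; reflexivity).
    constructor.
  - replace (rev (l1 ++ a :: b :: c :: l2)) with (rev l2 ++ c :: b :: a :: rev l1)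
      by (rewrite rev_app_distr; simpl; rewrite <- !app_assoc; reflexivity).
    replace (rev (l1 ++ a :: c :: l2)) with (rev l2 ++ c :: a :: rev l1)
      by (rewrite rev_app_distr; simpl; rewrite <- !app_assoc; reflexivity).
    constructor. apply rips_simplex_rev3; auto.
Qed.

Lemma hom_rev {X} (E : X -> X -> Prop) l l' :
  ep_homotopic E l l' -> ep_homotopic E (rev l) (rev l').
Proof.
  intros H; induction H.
  - apply rst_step; apply move_rev; auto.
  - apply rst_refl.
  - apply rst_sym; auto.
  - eapply rst_trans; eauto.
Qed.

Lemma epath_form {X} (E : X -> X -> Prop) x y l : epath E x y l -> exists l', l = x :: l'.
Proof. intros [_ [H _]]. destruct l; simpl in H; inversion H; eauto. Qed.

Arguments epath_form {X E x y l}.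
Lemma epath_last {X} (E : X -> X -> Prop) x y l : epath E x y l -> exists l', l = l' ++ [y].
Proof.
  intros Hp. destruct (epath_form Hp) as [l' ->]. destruct Hp as [_ [_ H]].
  exists (removelast (x :: l')). rewrite <- H. apply app_removelast_last. discriminate.
Qed.

Arguments epath_last {X E x y l}.
Lemma epath_mono {X} (F E : X -> X -> Prop) x y l : subrel F E -> epath F x y l -> epath E x y l.
Proof.
  intros HFE [C [H1 H2]]. split; auto. eapply chain_mono; [|exact C].
  unfold rips_edge; intros a b; apply rips_simplex_mono; auto.
Qed.

Arguments epath_mono {X F E x y l}.
Lemma epath_app {X} (E : X -> X -> Prop) x y z p q :
  E y y -> epath E x y p -> epath E y z q -> epath E x z (p ++ q).
Proof.
  intros Hy Hp Hq.
  destruct (epath_form Hp) as [p1 Hp1]. destruct (epath_last Hp) as [p2 Hp2].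
  destruct (epath_form Hq) as [q1 Hq1]. destruct (epath_last Hq) as [q2 Hq2].
  split; [|split].
  - rewrite Hp2, Hq1, <- app_assoc. simpl. apply chain_app2.
    + rewrite <- Hp2. apply Hp.
    + constructor. apply rips_edge_refl; auto. rewrite <- Hq1; apply Hq.
  - rewrite Hp1. reflexivity.
  - rewrite Hq2, app_assoc, last_last. reflexivity.
Qed.

Arguments epath_app {X E x y z p q}.
Lemma epath_rev {X} (E : X -> X -> Prop) x y p : epath E x y p -> epath E y x (rev p).
Proof.
  intros Hp.
  destruct (epath_form Hp) as [p1 Hp1]. destruct (epath_last Hp) as [p2 Hp2].
  split; [|split].
  - apply chain_rev. apply rips_edge_sym. apply Hp.
  - rewrite Hp2, rev_app_distr. reflexivity.
  - rewrite Hp1. simpl. apply last_last.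
Qed.

Arguments epath_rev {X E x y p}.
Lemma cancel_chain {X} (E : X -> X -> Prop) l : forall a,
  Chain (rips_edge E) (a :: l) -> ep_homotopic E ((a :: l) ++ rev (a :: l)) [a].
Proof.
  induction l as [|b l IH]; intros a C.
  - apply rst_step. apply (ep_stutter E [] a []).
  - inversion C; subst.
    replace ((a :: b :: l) ++ rev (a :: b :: l)) with ([a] ++ ((b :: l) ++ rev (b :: l)) ++ [a])
      by (simpl; rewrite <- !app_assoc; reflexivity).
    eapply rst_trans. apply hom_ctx. apply IH; auto.
    eapply rst_trans. apply rst_step. apply (@ep_triangle _ E [] a b a []). apply rips_tri; auto.
    apply rst_step. apply (ep_stutter E [] a []).
Qed.

Lemma cancel_epath {X} (E : X -> X -> Prop) u v q :
  epath E u v q -> ep_homotopic E (q ++ rev q) [u].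
Proof. intros Hq. destruct (epath_form Hq) as [l ->]. apply cancel_chain. apply Hq. Qed.

Arguments cancel_epath {X E u v q}.
Lemma stutter_front {X} (F E : X -> X -> Prop) x y a :
  epath F x y a -> ep_homotopic E (x :: a) a.
Proof. intros H. destruct (epath_form H) as [l ->]. apply rst_step. apply (ep_stutter E [] x l). Qed.

Lemma stutter_end {X} (F E : X -> X -> Prop) x y a :
  epath F x y a -> ep_homotopic E (a ++ [y]) a.
Proof.
  intros H. destruct (epath_last H) as [l ->]. rewrite <- app_assoc. simpl.
  apply rst_step. apply (ep_stutter E l y []).
Qed.

Arguments stutter_front {X F} E {x y a}.
Arguments stutter_end {X F} E {x y a}.

Lemma cc_path {X} (ent : (X -> X -> Prop) -> Prop) (F : X -> X -> Prop) x y :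
  is_uniformity ent -> chain_connected ent -> ent F -> exists l, epath F x y l.
Proof.
  intros Hu Hc HF.
  assert (HS : ent (fun a b => F a b /\ F b a)).
  { apply (unif_inter Hu); auto. apply (unif_inv Hu); auto. }
  destruct (Hc _ HS x y) as [l [C [H1 H2]]].
  exists l. split; auto. eapply chain_mono; [|exact C].
  intros a b [Hab Hba]. apply rips_edge_of; auto. apply (unif_refl Hu); auto.
Qed.

Lemma paths_equal {X} (F E : X -> X -> Prop) x y a b :
  subrel F E -> F y y -> (forall p, epath F x x p -> ep_homotopic E p [x]) ->
  epath F x y a -> epath F x y b -> ep_homotopic E a b.
Proof.
  intros HFE Hy Hl Ha Hb.
  assert (HL : ep_homotopic E (a ++ rev b) [x]) by (apply Hl; eapply epath_app; eauto; apply epath_rev; auto).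
  eapply rst_trans. apply rst_sym. apply (stutter_end E Ha).
  eapply rst_trans. apply hom_app_r. apply rst_sym. eapply hom_mono. exact HFE.
  pose proof (cancel_epath (epath_rev Hb)) as Hc. rewrite rev_involutive in Hc. exact Hc.
  rewrite app_assoc. eapply rst_trans. apply hom_app_l. exact HL.
  simpl. apply (stutter_front E Hb).
Qed.

Lemma triv_any {X} (ent : (X -> X -> Prop) -> Prop) (F E : X -> X -> Prop) x0 :
  is_uniformity ent -> chain_connected ent -> ent F -> subrel F E ->
  (forall p, epath F x0 x0 p -> ep_homotopic E p [x0]) ->
  forall x p, epath F x x p -> ep_homotopic E p [x].
Proof.
  intros Hu Hc HF HFE Hl x p Hp.
  assert (Hr : forall z, F z z) by (apply (unif_refl Hu); auto).
  destruct (cc_path ent F x0 x Hu Hc HF) as [q Hq].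
  assert (Hqp : ep_homotopic E (q ++ p) q).
  { eapply paths_equal; eauto. eapply epath_app; eauto. }
  eapply rst_trans. apply rst_sym. apply (stutter_front E Hp).
  change (x :: p) with ([x] ++ p).
  eapply rst_trans. apply hom_app_l. apply rst_sym. eapply hom_mono. exact HFE.
  pose proof (cancel_epath (epath_rev Hq)) as Hc'. rewrite rev_involutive in Hc'. exact Hc'.
  rewrite <- app_assoc. eapply rst_trans. apply hom_app_r. exact Hqp.
  eapply hom_mono. exact HFE.
  pose proof (cancel_epath (epath_rev Hq)) as Hc'. rewrite rev_involutive in Hc'. exact Hc'.
Qed.

Lemma part1 {X} (ent : (X -> X -> Prop) -> Prop) :
  is_uniformity ent -> chain_connected ent ->
  (exists x0 : X, pro_pi1_trivial ent x0) -> joinable ent.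
Proof.
  intros Hunif Hcc [x0 Htriv] x y.
  assert (Hex : forall E, exists l, ent E -> exists F, ent F /\ subrel F E /\
     (forall p, epath F x x p -> ep_homotopic E p [x]) /\ epath F x y l).
  { intro E. destruct (classic (ent E)) as [HE|HE].
    - destruct (Htriv E HE) as [F [HF [HFE Hl]]].
      destruct (cc_path ent F x y Hunif Hcc HF) as [l Hl'].
      exists l; intros _; exists F; split; [exact HF|split; [exact HFE|split; [|exact Hl']]].
      eapply triv_any; eauto.
    - exists []; intro; contradiction. }
  exists (fun E => proj1_sig (constructive_indefinite_description _ (Hex E))).
  assert (Hc : forall E, ent E -> exists F, ent F /\ subrel F E /\
     (forall p, epath F x x p -> ep_homotopic E p [x]) /\
     epath F x y (proj1_sig (constructive_indefinite_description _ (Hex E)))).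
  { intros E HE. exact (proj2_sig (constructive_indefinite_description _ (Hex E)) HE). }
  split.
  - intros E HE. destruct (Hc E HE) as [F [HF [HFE [_ Hp]]]]. eapply epath_mono; eauto.
  - intros E G HE HG HGE.
    destruct (Hc E HE) as [FE [HFE [HFEE [HlE HpE]]]].
    destruct (Hc G HG) as [FG [HFG [HFGG [HlG HpG]]]].
    assert (HH : ent (fun a b => FG a b /\ FE a b)) by (apply (unif_inter Hunif); auto).
    destruct (cc_path ent _ x y Hunif Hcc HH) as [p Hp].
    assert (H1 : ep_homotopic E (proj1_sig (constructive_indefinite_description _ (Hex G))) p).
    { eapply hom_mono. exact HGE. apply (paths_equal FG G x y _ p); auto.
      apply (unif_refl Hunif); auto. eapply epath_mono; [|exact Hp]. intros a b []; auto. }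
    assert (H2 : ep_homotopic E (proj1_sig (constructive_indefinite_description _ (Hex E))) p).
    { apply (paths_equal FE E x y _ p); auto.
      apply (unif_refl Hunif); auto. eapply epath_mono; [|exact Hp]. intros a b []; auto. }
    eapply rst_trans. exact H1. apply rst_sym. exact H2.
Qed.

Lemma seq_W {X} (ent : (X -> X -> Prop) -> Prop) (B : nat -> X -> X -> Prop) x0 :
  is_uniformity ent -> chain_connected ent ->
  (forall n, ent (B n)) -> (forall n, subrel (B (S n)) (B n)) -> lim1_zero B x0 ->
  forall z, exists W : nat -> list X, (forall n, epath (B n) x0 z (W n)) /\
    (forall n, ep_homotopic (B n) (W n) (W (S n))).
Proof.
  intros Hu Hc HB1 HB2 Hlim z.
  assert (Hr : forall n a, B n a a) by (intros; apply (unif_refl Hu); auto).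
  assert (Hw0 : forall n, exists l, epath (B n) x0 z l)
    by (intro n; apply (cc_path ent); auto).
  set (w := fun n => proj1_sig (constructive_indefinite_description _ (Hw0 n))).
  assert (Hw : forall n, epath (B n) x0 z (w n))
    by (intro n; exact (proj2_sig (constructive_indefinite_description _ (Hw0 n)))).
  set (g := fun n => w n ++ rev (w (S n))).
  assert (Hg : forall n, epath (B n) x0 x0 (g n)).
  { intro n. unfold g. eapply epath_app; auto. apply epath_rev.
    eapply epath_mono; [apply HB2| apply Hw]. }
  destruct (Hlim g Hg) as [h [Hh Hgh]].
  exists (fun n => rev (h n) ++ w n). split.
  - intro n. eapply epath_app; auto. apply epath_rev; auto.
  - intro n.
    assert (Hw' : epath (B n) x0 z (w (S n))) by (eapply epath_mono; [apply HB2| apply Hw]).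
    assert (Hh' : epath (B n) x0 x0 (h (S n))) by (eapply epath_mono; [apply HB2| apply Hh]).
    destruct (epath_form (epath_rev Hh')) as [t Ht].
    assert (E1 : ep_homotopic (B n) (w n) (loop_mul (h n) (loop_inv (h (S n))) ++ w (S n))).
    { eapply rst_trans. apply rst_sym. apply (stutter_end (B n) (Hw n)).
      eapply rst_trans. apply hom_app_r. apply rst_sym.
      pose proof (cancel_epath (epath_rev Hw')) as Hc'. rewrite rev_involutive in Hc'. exact Hc'.
      rewrite app_assoc. apply hom_app_l. apply (Hgh n). }
    eapply rst_trans. apply hom_app_r. exact E1.
    unfold loop_mul, loop_inv. rewrite Ht. simpl.
    rewrite app_assoc, app_assoc.
    eapply rst_trans. apply hom_app_l. apply hom_app_l.
    pose proof (cancel_epath (epath_rev (Hh n))) as Hc'. rewrite rev_involutive in Hc'. exact Hc'.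
    simpl. apply rst_refl.
Qed.

Lemma Bmono {X} (B : nat -> X -> X -> Prop) :
  (forall n, subrel (B (S n)) (B n)) -> forall i j, i <= j -> subrel (B j) (B i).
Proof.
  intros H i j Hij; induction Hij; unfold subrel in *; auto.
Qed.

Lemma part2 {X} (ent : (X -> X -> Prop) -> Prop) :
  is_uniformity ent -> chain_connected ent ->
  (exists (B : nat -> X -> X -> Prop) (x0 : X),
      decreasing_countable_base ent B /\ lim1_zero B x0) -> joinable ent.
Proof.
  intros Hu Hc [B [x0 [[HB1 [HB2 HB3]] Hlim]]] x y.
  destruct (seq_W ent B x0 Hu Hc HB1 HB2 Hlim x) as [Wx [Hx1 Hx2]].
  destruct (seq_W ent B x0 Hu Hc HB1 HB2 Hlim y) as [Wy [Hy1 Hy2]].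
  assert (Hmono : forall W z, (forall n, epath (B n) x0 z (W n)) ->
      (forall n, ep_homotopic (B n) (W n) (W (S n))) ->
      forall i j, i <= j -> ep_homotopic (B i) (W i) (W j)).
  { intros W z _ HW i j Hij. induction Hij. apply rst_refl.
    eapply rst_trans. exact IHHij. eapply hom_mono; [|apply HW].
    apply Bmono; auto. }
  set (P := fun n => rev (Wx n) ++ Wy n).
  assert (HP : forall n, epath (B n) x y (P n)).
  { intro n. unfold P. eapply epath_app. apply (unif_refl Hu); auto.
    apply epath_rev; auto. auto. }
  assert (HPc : forall i j, i <= j -> ep_homotopic (B i) (P i) (P j)).
  { intros i j Hij. unfold P. eapply rst_trans. apply hom_app_l. apply hom_rev.
    apply (Hmono Wx x); eauto. apply hom_app_r. apply (Hmono Wy y); eauto. }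
  assert (HN : forall E, exists n, ent E -> subrel (B n) E).
  { intro E. destruct (classic (ent E)) as [HE|HE].
    - destruct (HB3 E HE) as [n Hn]. exists n; auto.
    - exists 0; intro; contradiction. }
  set (N := fun E => proj1_sig (constructive_indefinite_description _ (HN E))).
  assert (HNs : forall E, ent E -> subrel (B (N E)) E)
    by (intro E; exact (proj2_sig (constructive_indefinite_description _ (HN E)))).
  exists (fun E => P (N E)). split.
  - intros E HE. eapply epath_mono; [apply HNs; auto| apply HP].
  - intros E F HE HF HFE. simpl.
    destruct (le_ge_dec (N F) (N E)) as [Hle|Hle].
    + eapply hom_mono; [|apply HPc; exact Hle].
      intros a b Hab. apply HFE, HNs; auto.
    + apply rst_sym. eapply hom_mono; [|apply HPc; exact Hle]. apply HNs; auto.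
Qed.

Theorem mainTheorem10 (X : Type) (ent : (X -> X -> Prop) -> Prop)
  (Hunif : is_uniformity ent) (Hcc : chain_connected ent) :
  ((exists x0 : X, pro_pi1_trivial ent x0) -> joinable ent) /\
  ((exists (B : nat -> X -> X -> Prop) (x0 : X),
      decreasing_countable_base ent B /\ lim1_zero B x0) -> joinable ent).
Proof.
  split; [apply part1 | apply part2]; auto.
Qed.
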